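(* Let $\phi\colon\Sigma'\to\Sigma$ be a harmonic map of weighted metric graphs with boundary. Define $\phi^*f=f\circ\phi$ for $f\in\mathcal A^{0,0}(\Sigma,\partial\Sigma)$, $\phi^*(f_e\,d't_e)=(f_{\phi(e')}\circ\phi\;d_{e'}(\phi)\,d't_{e'})$, $\phi^*(f_e\,d''t_e)=(f_{\phi(e')}\circ\phi\;d_{e'}(\phi)\,d''t_{e'})$, and $\phi^*(f_e\,d't_ed''t_e)=(f_{\phi(e')}\circ\phi\;d_{e'}(\phi)^2\,d't_{e'}d''t_{e'})$, where the coefficient on $e'$ is taken to be $0$ if $\phi(e')$ is a vertex. Then $\phi^*$ maps $\mathcal A^{p,q}(\Sigma,\partial\Sigma)$ into $\mathcal A^{p,q}(\Sigma',\partial\Sigma')$ and is a homomorphism of bigraded differential algebras $\mathcal A^{\bullet,\bullet}(\Sigma,\partial\Sigma)\to\mathcal A^{\bullet,\bullet}(\Sigma',\partial\Sigma')$.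
   Context: Weighted metric graph with boundary $(\Sigma,\partial\Sigma)$: finite multigraph without loop edges, oriented edges $e$ with length $\ell(e)>0$, parametrization $t_e\colon[0,\ell(e)]\to e$ ($t_e(0)=e^-$, $t_{\bar e}(x)=t_e(\ell(e)-x)$), weight $w(e)=w(\bar e)\in\mathbb Z_{>0}$, boundary $\partial\Sigma\subset V(\Sigma)$; subdivisions allowed. Pair smoothness at a valency-2 vertex $v$ with outgoing $e_1,e_2$: $(f_1,f_2)$ smooth at $v$ iff $w(e_1)^n\frac{d^nf_1}{dt_{e_1}^n}(v)=(-1)^nw(e_2)^n\frac{d^nf_2}{dt_{e_2}^n}(v)$ for all $n\ge0$. $\mathcal A^{0,0}$: continuous $f$, smooth on edges, at interior $v$: constant near $v$ (valency 1), $(f|_{e_1},f|_{e_2})$ smooth at $v$ (valency 2), $\sum_{e^-=v}w(e)\frac{df}{dt_e}(v)=0$ (valency $\ge3$). $\mathcal A^{1,0}$/$\mathcal A^{0,1}$: $(f_e\,d't_e)$/$(f_e\,d''t_e)$ with $f_{\bar e}=-f_e$, zero near interior valency-1 vertices, $(w(e_1)f_{e_1},-w(e_2)f_{e_2})$ smooth at interior valency-2 vertices, $\sum_{e^-=v}w(e)f_e(v)=0$ at interior valency $\ge3$. $\mathcal A^{1,1}$: $(f_e\,d't_ed''t_e)$, $f_{\bar e}=f_e$, zero near interior valency-1 vertices, $(w(e_1)^2f_{e_1},w(e_2)^2f_{e_2})$ smooth at interior valency-2 vertices. $d',d''$: $d'f=(\frac{df}{dt_e}d't_e)$, $d''f=(\frac{df}{dt_e}d''t_e)$,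 $d''(f_e\,d't_e)=(-\frac{df_e}{dt_e}d't_ed''t_e)$, $d'(f_e\,d''t_e)=(\frac{df_e}{dt_e}d't_ed''t_e)$; wedge product $(f_e\,d't_e)\wedge(g_e\,d''t_e)=(f_eg_e\,d't_ed''t_e)$, alternating. Piecewise linear map: continuous, after subdivision vertices→vertices, edges→edges homeomorphically or →vertices, boundary condition (if $\phi(v')\in\partial\Sigma$ and $\phi$ nonconstant near $v'$ then $v'\in\partial\Sigma'$), $\phi\circ t_{e'}(x)=t_e(d_{e'}(\phi)x)$ with $d_{e'}(\phi)=\ell(e)/\ell(e')$. Harmonic: at each $v'\notin\partial\Sigma'$, $\sum_{e'^-=v',e'\mapsto e}\frac{w(e')}{w(e)}d_{e'}(\phi)$ independent of edge $e$ at $\phi(v')$. *)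

(* Defs.v *)
From Stdlib Require Import Reals ClassicalEpsilon.
From Coquelicot Require Import Coquelicot.
From mathcomp Require Import ssreflect ssrbool ssrfun eqtype ssrnat seq fintype bigop.

Set Implicit Arguments.
Unset Strict Implicit.
Unset Printing Implicit Defensive.

Open Scope R_scope.

Definition deriv_on (L : R) (g h : R -> R) : Prop :=
  forall x, 0 <= x <= L ->
    filterlim (fun y => (g y - g x) / (y - x))
      (within (fun y => 0 <= y <= L /\ y <> x) (locally x))
      (locally (h x)).

Definition is_dtower (L : R) (f : R -> R) (D : nat -> R -> R) : Prop :=
  (forall x, 0 <= x <= L -> D 0%nat x = f x) /\
  (forall n, deriv_on L (D n) (D (S n))).

Definition smooth_on (L : R) (f : R -> R) : Prop := exists D, is_dtower L f D.

(* the n-th derivative d^n f / dt^n on [0,L] (meaningful when smooth_on L f) *)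
Definition Dn (L : R) (f : R -> R) (n : nat) (x : R) : R :=
  epsilon (inhabits (fun (_ : nat) (_ : R) => 0)) (is_dtower L f) n x.

Record wmgraph := WMGraph {
  V : finType;
  E : finType;
  src : E -> V;
  rev : E -> E;
  rev_invol : forall e, rev (rev e) = e;
  rev_neq : forall e, rev e <> e;
  no_loop : forall e, src (rev e) <> src e;
  len : E -> R;
  len_pos : forall e, 0 < len e;
  len_rev : forall e, len (rev e) = len e;
  wt : E -> nat;
  wt_pos : forall e, (0 < wt e)%N;
  wt_rev : forall e, wt (rev e) = wt e;
  bdry : V -> bool
}.

Arguments src {_}. Arguments rev {_}. Arguments len {_}. Arguments wt {_}.
Arguments bdry {_}.

(* the parametrization: the point of edge e with parameter x in [0, len e]
   is identified with the point of rev e with parameter len e - x. *)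

Definition valency (G : wmgraph) (v : V G) : nat := #|[pred e : E G | src e == v]|.

Definition wR (G : wmgraph) (e : E G) : R := INR (wt e).

Definition sum_out (G : wmgraph) (v : V G) (F : E G -> R) : R :=
  \big[Rplus/0]_(e : E G | src e == v) F e.

(* smoothness of a pair (f1,f2) at an interior valency-2 vertex v, with
   e1, e2 the two edges going out of v (so v = t_{e_i}(0)) *)
Definition pair_smooth (G : wmgraph) (e1 e2 : E G) (f1 f2 : R -> R) : Prop :=
  forall n : nat,
    (wR e1) ^ n * Dn (len e1) f1 n 0 = (-1) ^ n * (wR e2) ^ n * Dn (len e2) f2 n 0.

(* A function on Sigma: its values at vertices and, on each oriented edge e,
   the function x |-> f(t_e(x)) (only its values on [0, len e] matter). *)
Record fun0 (G : wmgraph) := Fun0 { fV : V G -> R ; fE : E G -> R -> R }.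
Arguments fV {G}. Arguments fE {G}.

(* coefficient families (f_e)_e of a (1,0)-, (0,1)- or (1,1)-form:
   the form is (f_e d't_e), (f_e d''t_e) or (f_e d't_e d''t_e). *)
Definition coef (G : wmgraph) := E G -> R -> R.

Definition in_edge (G : wmgraph) (e : E G) (x : R) := 0 <= x <= len e.

Definition eq0 (G : wmgraph) (f g : fun0 G) : Prop :=
  (forall v, fV f v = fV g v) /\
  (forall e x, in_edge e x -> fE f e x = fE g e x).
Definition eqc (G : wmgraph) (a b : coef G) : Prop :=
  forall e x, in_edge e x -> a e x = b e x.

Definition A00 (G : wmgraph) (f : fun0 G) : Prop :=
  (* f is a well defined continuous function on Sigma *)
  (forall e, fE f e 0 = fV f (src e)) /\
  (forall e x, in_edge e x -> fE f (rev e) x = fE f e (len e - x)) /\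
  (forall e, smooth_on (len e) (fE f e)) /\
  (forall v, bdry v = false ->
     (valency v = 1%N ->
        forall e, src e = v ->
          exists eps, 0 < eps /\ forall x, 0 <= x <= eps -> fE f e x = fV f v) /\
     (valency v = 2%N ->
        forall e1 e2, src e1 = v -> src e2 = v -> e1 <> e2 ->
          pair_smooth e1 e2 (fE f e1) (fE f e2)) /\
     ((3 <= valency v)%N ->
        sum_out v (fun e => wR e * Dn (len e) (fE f e) 1 0) = 0)).

Definition A10 (G : wmgraph) (a : coef G) : Prop :=
  (forall e x, in_edge e x -> a (rev e) x = - a e (len e - x)) /\
  (forall e, smooth_on (len e) (a e)) /\
  (forall v, bdry v = false ->
     (valency v = 1%N ->
        forall e, src e = v ->
          exists eps, 0 < eps /\ forall x, 0 <= x <= eps -> a e x = 0) /\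
     (valency v = 2%N ->
        forall e1 e2, src e1 = v -> src e2 = v -> e1 <> e2 ->
          pair_smooth e1 e2 (fun x => wR e1 * a e1 x) (fun x => - (wR e2 * a e2 x))) /\
     ((3 <= valency v)%N -> sum_out v (fun e => wR e * a e 0) = 0)).

Definition A01 (G : wmgraph) (a : coef G) : Prop := A10 a.

Definition A11 (G : wmgraph) (a : coef G) : Prop :=
  (forall e x, in_edge e x -> a (rev e) x = a e (len e - x)) /\
  (forall e, smooth_on (len e) (a e)) /\
  (forall v, bdry v = false ->
     (valency v = 1%N ->
        forall e, src e = v ->
          exists eps, 0 < eps /\ forall x, 0 <= x <= eps -> a e x = 0) /\
     (valency v = 2%N ->
        forall e1 e2, src e1 = v -> src e2 = v -> e1 <> e2 ->
          pair_smooth e1 e2 (fun x => (wR e1) ^ 2 * a e1 x)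
                            (fun x => (wR e2) ^ 2 * a e2 x))).

Definition one0 (G : wmgraph) : fun0 G := Fun0 (fun _ => 1) (fun _ _ => 1).
Definition add0 (G : wmgraph) (f g : fun0 G) : fun0 G :=
  Fun0 (fun v => fV f v + fV g v) (fun e x => fE f e x + fE g e x).
Definition scale0 (G : wmgraph) (c : R) (f : fun0 G) : fun0 G :=
  Fun0 (fun v => c * fV f v) (fun e x => c * fE f e x).
Definition mul0 (G : wmgraph) (f g : fun0 G) : fun0 G :=
  Fun0 (fun v => fV f v * fV g v) (fun e x => fE f e x * fE g e x).

Definition addc (G : wmgraph) (a b : coef G) : coef G := fun e x => a e x + b e x.
Definition scalec (G : wmgraph) (c : R) (a : coef G) : coef G := fun e x => c * a e x.
Definition mul0c (G : wmgraph) (f : fun0 G) (a : coef G) : coef G :=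
  fun e x => fE f e x * a e x.
(* (a d't) /\ (b d''t) = (a b d't d''t) *)
Definition wedge10_01 (G : wmgraph) (a b : coef G) : coef G := fun e x => a e x * b e x.
(* (b d''t) /\ (a d't) = - (a b d't d''t)  (alternating) *)
Definition wedge01_10 (G : wmgraph) (b a : coef G) : coef G := fun e x => - (b e x * a e x).

Definition d'0 (G : wmgraph) (f : fun0 G) : coef G := fun e x => Dn (len e) (fE f e) 1 x.
Definition d''0 (G : wmgraph) (f : fun0 G) : coef G := fun e x => Dn (len e) (fE f e) 1 x.
(* d''(f_e d't_e) = (- df_e/dt_e d't_e d''t_e) *)
Definition d''10 (G : wmgraph) (a : coef G) : coef G := fun e x => - Dn (len e) (a e) 1 x.
Definition d'01 (G : wmgraph) (a : coef G) : coef G := fun e x => Dn (len e) (a e) 1 x.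

(* Piecewise linear maps (already cellular: vertices to vertices, edges  *)
(* to edges linearly or to vertices) and harmonic maps                  *)

Record plmap (G' G : wmgraph) := PLMap {
  phiV : V G' -> V G;
  phiE : E G' -> option (E G);   (* None: the edge is contracted to a vertex *)
  phiE_src : forall e' e, phiE e' = Some e -> src e = phiV (src e');
  phiE_rev : forall e', phiE (rev e') = option_map rev (phiE e');
  phiE_contr : forall e', phiE e' = None -> phiV (src (rev e')) = phiV (src e');
  phi_bdry : forall v', bdry (phiV v') ->
     (exists e', src e' = v' /\ phiE e' <> None) -> bdry v'
}.
Arguments phiV {G' G}. Arguments phiE {G' G}.
(* On an edge e' with phiE e' = Some e the map is
   phi (t_{e'}(x)) = t_e (d_{e'}(phi) x),  d_{e'}(phi) = len e / len e'. *)

Definition dphi (G' G : wmgraph) (phi : plmap G' G) (e' : E G') : R :=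
  match phiE phi e' with Some e => len e / len e' | None => 0 end.

Definition harmonic (G' G : wmgraph) (phi : plmap G' G) : Prop :=
  forall v' : V G', bdry v' = false ->
  forall e1 e2 : E G, src e1 = phiV phi v' -> src e2 = phiV phi v' ->
    \big[Rplus/0]_(e' : E G' | (src e' == v') && (phiE phi e' == Some e1))
        (wR e' / wR e1 * dphi phi e')
    = \big[Rplus/0]_(e' : E G' | (src e' == v') && (phiE phi e' == Some e2))
        (wR e' / wR e2 * dphi phi e').

Definition pull0 (G' G : wmgraph) (phi : plmap G' G) (f : fun0 G) : fun0 G' :=
  Fun0 (fun v' => fV f (phiV phi v'))
       (fun e' x => match phiE phi e' with
                    | Some e => fE f e (dphi phi e' * x)
                    | None => fV f (phiV phi (src e'))
                    end).

Definition pull1 (G' G : wmgraph) (phi : plmap G' G) (a : coef G) : coef G' :=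
  fun e' x => match phiE phi e' with
              | Some e => a e (dphi phi e' * x) * dphi phi e'
              | None => 0
              end.

Definition pull11 (G' G : wmgraph) (phi : plmap G' G) (a : coef G) : coef G' :=
  fun e' x => match phiE phi e' with
              | Some e => a e (dphi phi e' * x) * (dphi phi e') ^ 2
              | None => 0
              end.

(* Main.v *)
From HB Require Import structures.
Require Import Defs.
From Stdlib Require Import Reals Lra ClassicalEpsilon.
From Coquelicot Require Import Coquelicot.
From mathcomp Require Import ssreflect ssrbool ssrfun eqtype ssrnat seq fintype bigop.
Open Scope R_scope.
Set Implicit Arguments.
Unset Strict Implicit.

Definition lim_at (P : R -> Prop) (x : R) (q : R -> R) (l : R) : Prop :=
  forall eps, 0 < eps -> exists del, 0 < del /\
    forall y, P y -> y <> x -> Rabs (y - x) < del -> Rabs (q y - l) < eps.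

Lemma ballR (x e y : R) : ball x e y <-> Rabs (y - x) < e.
Proof. split => //. Qed.

Lemma filterlim_lim_at (P : R -> Prop) x q l :
  filterlim q (within (fun y => P y /\ y <> x) (locally x)) (locally l) <-> lim_at P x q l.
Proof.
split.
- move=> H eps Heps.
  have := H (ball l eps) (locally_ball l (mkposreal eps Heps)).
  case=> del Hd. exists (pos del); split; first exact: cond_pos.
  move=> y Py Hyx Hy. apply ballR. apply: Hd; last by split.
  exact (proj2 (ballR _ _ _) Hy).
- move=> H Q [eps He].
  case: (H eps (cond_pos eps)) => del [Hdel Hy].
  exists (mkposreal del Hdel) => y Hb [Py Hne]. apply: He. apply ballR. apply: Hy => //. 
Qed.

Definition quot (g : R -> R) (x : R) := fun y => (g y - g x) / (y - x).
Definition IL (L : R) := fun y => 0 <= y <= L.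

Lemma deriv_on_iff L g h : deriv_on L g h <-> forall x, 0 <= x <= L -> lim_at (IL L) x (quot g x) (h x).
Proof.
split => H x Hx; have := H x Hx; rewrite /deriv_on.
- by move/filterlim_lim_at.
- by move=> /filterlim_lim_at.
Qed.

Lemma lim_unique_gen L x r q1 q2 l1 l2 : 0 < L -> 0 <= x <= L -> 0 < r ->
  (forall y, IL L y -> y <> x -> Rabs (y - x) < r -> q1 y = q2 y) ->
  lim_at (IL L) x q1 l1 -> lim_at (IL L) x q2 l2 -> l1 = l2.
Proof.
move=> HL Hx Hr Heq H1 H2.
destruct (Req_dec l1 l2) as [|Hne]; first by [].
exfalso.
have He : 0 < Rabs (l1 - l2) / 2.
  have := Rabs_pos_lt (l1 - l2). have : l1 - l2 <> 0 by lra. move=> h1 h2. have := h2 h1. lra.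
case: (H1 _ He) => d1 [Hd1 Q1]. case: (H2 _ He) => d2 [Hd2 Q2].
set d := Rmin (Rmin d1 d2) (Rmin r L).
have Hd : 0 < d by apply: Rmin_pos; apply: Rmin_pos.
have Hd1' : d <= d1 by rewrite /d; apply: Rle_trans (Rmin_l _ _) (Rmin_l _ _).
have Hd2' : d <= d2 by rewrite /d; apply: Rle_trans (Rmin_l _ _) (Rmin_r _ _).
have Hr' : d <= r by rewrite /d; apply: Rle_trans (Rmin_r _ _) (Rmin_l _ _).
have HL' : d <= L by rewrite /d; apply: Rle_trans (Rmin_r _ _) (Rmin_r _ _).
have [y [Hy [Hyx Hyd]]] : exists y, IL L y /\ y <> x /\ Rabs (y - x) < d.
  destruct (Rle_dec x (L/2)).
  - exists (x + d/2). rewrite /IL. split; first lra. split; first lra.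
    rewrite Rabs_right; lra.
  - exists (x - d/2). rewrite /IL. split; first lra. split; first lra.
    rewrite Rabs_left; lra.
have E1 := Q1 y Hy Hyx ltac:(lra). have E2 := Q2 y Hy Hyx ltac:(lra).
rewrite (Heq y Hy Hyx ltac:(lra)) in E1.
have : Rabs (l1 - l2) <= Rabs (q2 y - l1) + Rabs (q2 y - l2).
  replace (l1 - l2) with (-(q2 y - l1) + (q2 y - l2)) by ring.
  apply: Rle_trans (Rabs_triang _ _) _. rewrite Rabs_Ropp. lra.
lra.
Qed.

Lemma lim_ext P x q1 q2 l : (forall y, P y -> y <> x -> q1 y = q2 y) ->
  lim_at P x q1 l -> lim_at P x q2 l.
Proof.
move=> Heq H eps He. case: (H eps He) => d [Hd Q]. exists d; split => // y Py Hyx Hy.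
rewrite -Heq //. exact: Q.
Qed.

Lemma lim_const P x c : lim_at P x (fun _ => c) c.
Proof. move=> eps He; exists 1; split; first lra. move=> *. rewrite Rminus_eq_0 Rabs_R0. lra. Qed.

Lemma lim_lin P P' x q l d K : lim_at P (d * x) q l -> 0 < d ->
  (forall y, P' y -> P (d * y)) -> lim_at P' x (fun y => K * q (d * y)) (K * l).
Proof.
move=> H Hd HP eps He.
have HK : 0 < Rabs K + 1 by have := Rabs_pos K; lra.
case: (H (eps / (Rabs K + 1))) => [|del [Hdel Q]].
  apply: Rdiv_lt_0_compat => //.
exists (del / d); split; first exact: Rdiv_lt_0_compat.
move=> y Py Hyx Hy.
have Hne : d * y <> d * x by move=> E; apply: Hyx; apply: (Rmult_eq_reg_l d) => //; lra.
have Hlt : Rabs (d * y - d * x) < del.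
  rewrite -Rmult_minus_distr_l Rabs_mult (Rabs_right d); last lra.
  have := Rmult_lt_compat_l d _ _ Hd Hy. by replace (d * (del / d)) with del by (field; lra).
have := Q _ (HP _ Py) Hne Hlt => Hq.
rewrite -Rmult_minus_distr_l Rabs_mult.
have HKp := Rabs_pos K.
apply: (Rle_lt_trans _ (Rabs K * (eps / (Rabs K + 1)))).
  apply: Rmult_le_compat_l => //. lra.
apply: (Rlt_le_trans _ ((Rabs K + 1) * (eps / (Rabs K + 1)))).
  apply: Rmult_lt_compat_r; last lra. exact: Rdiv_lt_0_compat.
right; field; lra.
Qed.

Lemma Dn_tower L f : smooth_on L f -> is_dtower L f (Dn L f).
Proof. move=> H. exact: (epsilon_spec _ _ H). Qed.

Lemma tower_unique L f D1 D2 : 0 < L -> is_dtower L f D1 -> is_dtower L f D2 ->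
  forall n x, 0 <= x <= L -> D1 n x = D2 n x.
Proof.
move=> HL [T10 T11] [T20 T21]. elim=> [|n IH] x Hx.
  by rewrite T10 // T20.
have A1 := proj1 (deriv_on_iff _ _ _) (T11 n) x Hx.
have A2 := proj1 (deriv_on_iff _ _ _) (T21 n) x Hx.
refine (lim_unique_gen HL Hx Rlt_0_1 _ A1 A2) => y Hy _ _.
by rewrite /quot IH // IH.
Qed.

Lemma Dn_eq L f D n x : 0 < L -> is_dtower L f D -> 0 <= x <= L -> Dn L f n x = D n x.
Proof.
move=> HL HD Hx. apply: (tower_unique HL _ HD) => //. apply: Dn_tower. by exists D.
Qed.

Lemma tower_ext L f g D : (forall x, 0 <= x <= L -> f x = g x) -> is_dtower L f D -> is_dtower L g D.
Proof. move=> E [T0 T1]; split => // x Hx. rewrite -E //. exact: T0. Qed.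

Lemma tower_scale L L' f D d c : is_dtower L f D -> 0 < d -> d * L' = L ->
  is_dtower L' (fun x => c * f (d * x)) (fun n x => c * d ^ n * D n (d * x)).
Proof.
move=> [T0 T1] Hd HdL; split.
  move=> x Hx /=. rewrite T0; first ring.
  split; first by apply: Rmult_le_pos; lra.
  rewrite -HdL. apply: Rmult_le_compat_l; lra.
move=> n. apply/deriv_on_iff => x Hx.
have Hdx : 0 <= d * x <= L.
  split; first by apply: Rmult_le_pos; lra.
  rewrite -HdL. apply: Rmult_le_compat_l; lra.
have A := proj1 (deriv_on_iff _ _ _) (T1 n) _ Hdx.
have B := lim_lin (c * d ^ (S n)) A Hd (P' := IL L') _.
have B' : lim_at (IL L') x (fun y => c * d ^ S n * quot (D n) (d * x) (d * y))
   (c * d ^ S n * D n.+1 (d * x)).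
  apply: B => y [Hy1 Hy2]. split; first by apply: Rmult_le_pos; lra.
  rewrite -HdL. apply: Rmult_le_compat_l; lra.
apply: lim_ext B' => y _ Hyx. rewrite /quot /=.
have H1 : y - x <> 0 by lra.
have H2 : d * y - d * x <> 0.
  move=> E. apply: Hyx. apply: (Rmult_eq_reg_l d); lra.
field. done.
Qed.

Lemma tower_const L c : is_dtower L (fun _ => c) (fun n _ => match n with O => c | S _ => 0 end).
Proof.
split => // n. apply/deriv_on_iff => x Hx.
apply: lim_ext (lim_const _ x 0) => y _ Hyx. rewrite /quot. field. lra.
Qed.

Lemma tower_loc_const L f D eps c : 0 < L -> is_dtower L f D -> 0 < eps ->
  (forall x, 0 <= x <= eps -> f x = c) -> D 0%nat 0 = c /\ forall n, D (S n) 0 = 0.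
Proof.
move=> HL [T0 T1] He Hc.
set m := Rmin eps L.
have Hm : 0 < m by apply: Rmin_pos.
have Hm1 : m <= eps by apply: Rmin_l.
have Hm2 : m <= L by apply: Rmin_r.
have K : forall n x, 0 <= x < m -> D n x = match n with O => c | S _ => 0 end.
  elim=> [|n IH] x Hx.
    rewrite T0; last lra. apply: Hc; lra.
  have A1 := proj1 (deriv_on_iff _ _ _) (T1 n) x ltac:(lra).
  have A2 := lim_const (IL L) x 0.
  apply: (lim_unique_gen HL _ _ _ A1 A2); first lra.
    instantiate (1 := m - x). lra.
  move=> y [Hy1 Hy2] Hyx Hy. rewrite /quot.
  have Hym : y < m by have := Rle_abs (y - x); lra.
  rewrite IH; last lra. rewrite IH; last lra. field. lra.
split; first by apply: K; lra.
move=> n. apply: K; lra.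
Qed.

Lemma DnS L L' f g d c : 0 < L' -> smooth_on L f -> 0 < d -> d * L' = L ->
  (forall x, 0 <= x <= L' -> g x = c * f (d * x)) ->
  smooth_on L' g /\ forall n x, 0 <= x <= L' -> Dn L' g n x = c * d ^ n * Dn L f n (d * x).
Proof.
move=> HL' Hf Hd HdL Hg.
have T := tower_scale c (Dn_tower Hf) Hd HdL.
have T' : is_dtower L' g (fun n x => c * d ^ n * Dn L f n (d * x)).
  apply: tower_ext T => x Hx. by rewrite Hg.
split; first by exists (fun n x => c * d ^ n * Dn L f n (d * x)).
move=> n x Hx. by rewrite (Dn_eq n HL' T' Hx).
Qed.

Lemma DnC L g c : 0 < L -> (forall x, 0 <= x <= L -> g x = c) ->
  smooth_on L g /\ forall n x, 0 <= x <= L -> Dn L g n x = match n with O => c | S _ => 0 end.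
Proof.
move=> HL Hg.
have T : is_dtower L g (fun n (_ : R) => match n with O => c | S _ => 0 end).
  apply: tower_ext (tower_const L c) => x Hx. by rewrite Hg.
split; first by eexists; exact: T.
move=> n x Hx. by rewrite (Dn_eq n HL T Hx).
Qed.

Lemma DnLC L g eps c : 0 < L -> smooth_on L g -> 0 < eps ->
  (forall x, 0 <= x <= eps -> g x = c) -> Dn L g 0%nat 0 = c /\ forall n, Dn L g (S n) 0 = 0.
Proof.
move=> HL Hg He Hc. exact: (tower_loc_const HL (Dn_tower Hg) He Hc).
Qed.

Lemma Rplus_assoc' : associative Rplus.
Proof. move=> x y z; ring. Qed.
HB.instance Definition _ := Monoid.isComLaw.Build R 0 Rplus Rplus_assoc' Rplus_comm Rplus_0_l.

Section Sums.
Variable I : finType.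

Lemma sumR_mull (P : pred I) (F : I -> R) c :
  \big[Rplus/0]_(i | P i) (c * F i) = c * \big[Rplus/0]_(i | P i) F i.
Proof.
apply: (big_rec2 (fun a b => a = c * b)); first ring.
move=> i a b _ ->; ring.
Qed.

Lemma sumR_ge0 (P : pred I) (F : I -> R) :
  (forall i, P i -> 0 <= F i) -> 0 <= \big[Rplus/0]_(i | P i) F i.
Proof.
move=> H. apply: (big_ind (fun x => 0 <= x)) => //; first lra.
move=> x y; lra.
Qed.

Lemma sumR_pos (P : pred I) (F : I -> R) i0 :
  P i0 -> 0 < F i0 -> (forall i, P i -> 0 <= F i) -> 0 < \big[Rplus/0]_(i | P i) F i.
Proof.
move=> Pi0 Fi0 H. rewrite (bigD1 i0) //=.
have := @sumR_ge0 (fun i => P i && (i != i0)) F ltac:(move=> i /andP [Pi _]; exact: H).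
lra.
Qed.

Lemma sumR_0 (P : pred I) (F : I -> R) :
  (forall i, P i -> F i = 0) -> \big[Rplus/0]_(i | P i) F i = 0.
Proof. move=> H. by apply: big1. Qed.

End Sums.

Section Graph.
Variable G : wmgraph.

Lemma inA (v : V G) e : (e \in [pred e : E G | src e == v]) = (src e == v).
Proof. by []. Qed.

Lemma val1_all (v : V G) e : valency v = 1%N -> src e = v -> forall e2, src e2 = v -> e2 = e.
Proof.
rewrite /valency => H He e2 He2.
have : (#|[pred e : E G | src e == v]| <= 1)%N by rewrite H.
move/card_le1P => /(_ e). rewrite inA He eqxx => /(_ isT) /(_ e2).
rewrite inA He2 eqxx. by move/esym/eqP.
Qed.

Lemma val1_of (v : V G) e : src e = v -> (forall e2, src e2 = v -> e2 = e) -> valency v = 1%N.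
Proof.
move=> He H. rewrite /valency. apply: eq_card1 => x. rewrite inA.
apply/eqP/eqP => [Hx|->] //. exact: H. by rewrite He.
Qed.

Lemma val2_all (v : V G) e1 e2 : valency v = 2%N -> src e1 = v -> src e2 = v -> e1 <> e2 ->
  forall e3, src e3 = v -> e3 = e1 \/ e3 = e2.
Proof.
move=> H H1 H2 H12 e3 H3.
case: (e3 =P e1) => [|N1]; first by left.
case: (e3 =P e2) => [|N2]; first by right.
exfalso. have : (2 < #|[pred e : E G | src e == v]|)%N.
  apply/card_gt2P. exists e1, e2, e3. rewrite !inA H1 H2 H3 eqxx. split => //.
  split; apply/eqP => E; [exact: H12 E|exact: N2 (esym E)|exact: N1 E].
by rewrite -/(valency v) H.
Qed.

Lemma val2_ex (v : V G) : valency v = 2%N -> exists e1 e2, src e1 = v /\ src e2 = v /\ e1 <> e2.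
Proof.
move=> H. have : (1 < #|[pred e : E G | src e == v]|)%N by rewrite -/(valency v) H.
case/card_gt1P => x [y [Hx Hy Hxy]]. exists x, y.
rewrite !inA in Hx Hy. split; first exact/eqP. split; first exact/eqP. exact/eqP.
Qed.

Lemma val2_of (v : V G) e1 e2 : src e1 = v -> src e2 = v -> e1 <> e2 ->
  (forall e3, src e3 = v -> e3 = e1 \/ e3 = e2) -> valency v = 2%N.
Proof.
move=> H1 H2 H12 H. rewrite /valency (@eq_card _ _ (pred2 e1 e2)).
  rewrite card2. by case: (e1 =P e2).
move=> x. rewrite inA /=. apply/eqP/orP => [Hx|[/eqP->|/eqP->]] //.
by case: (H x Hx) => ->; [left|right]; rewrite eqxx.
Qed.

Lemma val0 (v : V G) : valency v = 0%N -> forall e, src e <> v.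
Proof.
move=> H e He. have := card0_eq H e. by rewrite inA He eqxx.
Qed.

Lemma sum2 (v : V G) e1 e2 F : valency v = 2%N -> src e1 = v -> src e2 = v -> e1 <> e2 ->
  sum_out v F = F e1 + F e2.
Proof.
move=> H H1 H2 H12. rewrite /sum_out (bigD1 e1) /=; last by rewrite H1.
congr Rplus. apply: big_pred1 => x /=.
apply/andP/eqP => [[/eqP Hx /eqP N]|->].
  by case: (val2_all H H1 H2 H12 Hx).
split; first by rewrite H2. apply/eqP => E. exact: H12 (esym E).
Qed.

Lemma sum_out_cases (v : V G) (F : E G -> R) :
  (valency v = 1%N -> forall e, src e = v -> F e = 0) ->
  (valency v = 2%N -> forall e1 e2, src e1 = v -> src e2 = v -> e1 <> e2 -> F e1 + F e2 = 0) ->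
  ((3 <= valency v)%N -> sum_out v F = 0) -> sum_out v F = 0.
Proof.
move=> C1 C2 C3.
case Hv: (valency v) => [|[|[|n]]].
- rewrite /sum_out big_pred0 // => e /=. apply/eqP. exact: val0 Hv e.
- apply: sumR_0 => e /eqP. exact: C1.
- case: (val2_ex Hv) => e1 [e2 [H1 [H2 H12]]].
  rewrite (sum2 F Hv H1 H2 H12). exact: C2.
- apply: C3. by rewrite Hv.
Qed.

Lemma wR_pos (e : E G) : 0 < wR e.
Proof. rewrite /wR. apply: lt_0_INR. apply/ltP. exact: wt_pos. Qed.

End Graph.

Lemma sumR_mulr (I : finType) (P : pred I) (F : I -> R) c :
  \big[Rplus/0]_(i | P i) (F i * c) = \big[Rplus/0]_(i | P i) F i * c.
Proof.
rewrite Rmult_comm -sumR_mull. apply: eq_bigr => i _; ring.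
Qed.

Section Phi.
Variables (G' G : wmgraph) (phi : plmap G' G).

Lemma dphi_Some e' e : phiE phi e' = Some e -> dphi phi e' = len e / len e'.
Proof. by rewrite /dphi => ->. Qed.

Lemma dphi_pos e' e : phiE phi e' = Some e -> 0 < dphi phi e'.
Proof.
move=> H. rewrite (dphi_Some H). apply: Rdiv_lt_0_compat; exact: len_pos.
Qed.

Lemma dphi_ge0 e' : 0 <= dphi phi e'.
Proof.
case H: (phiE phi e') => [e|]; first by have := dphi_pos H; lra.
rewrite /dphi H; lra.
Qed.

Lemma dphi_len e' e : phiE phi e' = Some e -> dphi phi e' * len e' = len e.
Proof. move=> H. rewrite (dphi_Some H). field. have := len_pos e'; lra. Qed.

Lemma dphi_rev e' : dphi phi (Defs.rev e') = dphi phi e'.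
Proof.
rewrite /dphi phiE_rev. case: (phiE phi e') => [e|] //=. by rewrite !len_rev.
Qed.

Lemma in_scaled e' e x : phiE phi e' = Some e -> 0 <= x <= len e' -> 0 <= dphi phi e' * x <= len e.
Proof.
move=> H Hx. have Hd := dphi_pos H. split; first by apply: Rmult_le_pos; lra.
rewrite -(dphi_len H). apply: Rmult_le_compat_l; lra.
Qed.

Lemma bdry_noncontr v' e' e : bdry v' = false -> src e' = v' -> phiE phi e' = Some e ->
  bdry (phiV phi v') = false.
Proof.
move=> Hb He Hp. case Hb': (bdry (phiV phi v')) => //.
have := phi_bdry Hb'. rewrite Hb. move=> H; exfalso.
have : false by apply: H; exists e'; split => //; rewrite Hp.
done.
Qed.

Lemma harm_hit v' e1' e1 e2 : harmonic phi -> bdry v' = false -> src e1' = v' ->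
  phiE phi e1' = Some e1 -> src e2 = phiV phi v' ->
  exists e2', src e2' = v' /\ phiE phi e2' = Some e2.
Proof.
move=> Hh Hb H1 Hp1 H2.
case: (pickP [pred e' | (src e' == v') && (phiE phi e' == Some e2)]) => [e2' /andP [/eqP A /eqP B]|Hn].
  by exists e2'.
exfalso.
have E := Hh v' Hb e1 e2 (etrans (phiE_src Hp1) (f_equal _ H1)) H2.
rewrite [X in _ = X]big_pred0 in E; last by move=> x; exact: Hn x.
have : 0 < \big[Rplus/0]_(e' | (src e' == v') && (phiE phi e' == Some e1))
             (wR e' / wR e1 * dphi phi e').
  apply: (sumR_pos (i0 := e1')).
  - by rewrite H1 Hp1 !eqxx.
  - apply: Rmult_lt_0_compat; last exact: dphi_pos Hp1.
    apply: Rdiv_lt_0_compat; exact: wR_pos.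
  - move=> i _. apply: Rmult_le_pos; last exact: dphi_ge0.
    apply: Rlt_le. apply: Rdiv_lt_0_compat; exact: wR_pos.
lra.
Qed.

Lemma hit_val1 v' e' e : harmonic phi -> bdry v' = false -> src e' = v' -> phiE phi e' = Some e ->
  (forall e2', src e2' = v' -> phiE phi e2' <> None -> phiE phi e2' = Some e) ->
  valency (phiV phi v') = 1%N.
Proof.
move=> Hh Hb He Hp H.
have Hs : src e = phiV phi v' by rewrite (phiE_src Hp) He.
apply: (val1_of Hs) => e2 He2.
case: (harm_hit Hh Hb He Hp He2) => e2' [A B].
have := H e2' A. rewrite B => /(_ ltac:(discriminate)). by case.
Qed.

Definition LC v' e' := phiE phi e' = None \/
  exists e, phiE phi e' = Some e /\ valency (phiV phi v') = 1%N /\ bdry (phiV phi v') = false.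

Lemma v1_cases v' e' : harmonic phi -> bdry v' = false -> valency v' = 1%N -> src e' = v' -> LC v' e'.
Proof.
move=> Hh Hb Hv He. case Hp: (phiE phi e') => [e|]; last by left.
right; exists e; split => //. split; last exact: bdry_noncontr Hp.
apply: (hit_val1 Hh Hb He Hp) => e2' H2 _. by rewrite (val1_all Hv He H2).
Qed.

Lemma v2_cases v' e1' e2' : harmonic phi -> bdry v' = false -> valency v' = 2%N ->
  src e1' = v' -> src e2' = v' -> e1' <> e2' ->
  (exists e1 e2, phiE phi e1' = Some e1 /\ phiE phi e2' = Some e2 /\ e1 <> e2 /\
     valency (phiV phi v') = 2%N /\ bdry (phiV phi v') = false /\
     wR e1' / wR e1 * dphi phi e1' = wR e2' / wR e2 * dphi phi e2')
  \/ (LC v' e1' /\ LC v' e2').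
Proof.
move=> Hh Hb Hv H1 H2 H12.
have All := val2_all Hv H1 H2 H12.
case Hp1: (phiE phi e1') => [e1|]; case Hp2: (phiE phi e2') => [e2|].
- case: (e1 =P e2) => [E|N].
  + subst e2. right.
    have V1 : valency (phiV phi v') = 1%N.
      apply: (hit_val1 Hh Hb H1 Hp1) => e3 H3 _.
      by case: (All e3 H3) => ->.
    have Bv := bdry_noncontr Hb H1 Hp1.
    split; right; exists e1; by [].
  + left. exists e1, e2. do 3 (split => //).
    have Bv := bdry_noncontr Hb H1 Hp1.
    have S1 : src e1 = phiV phi v' by rewrite (phiE_src Hp1) H1.
    have S2 : src e2 = phiV phi v' by rewrite (phiE_src Hp2) H2.
    split.
      apply: (val2_of S1 S2 N) => e3 H3.
      case: (harm_hit Hh Hb H1 Hp1 H3) => e3' [A B].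
      case: (All e3' A) => E; subst e3'.
      * left. rewrite Hp1 in B. by case: B.
      * right. rewrite Hp2 in B. by case: B.
    split => //.
    have := Hh v' Hb e1 e2 S1 S2.
    rewrite (@big_pred1 _ _ _ _ e1') ; last first.
      move=> x /=. apply/andP/eqP => [[/eqP A /eqP B]|->]; last by rewrite H1 Hp1 !eqxx.
      case: (All x A) => // E; subst x. rewrite Hp2 in B. case: B => B. by case: N.
    rewrite (@big_pred1 _ _ _ _ e2') //.
      move=> x /=. apply/andP/eqP => [[/eqP A /eqP B]|->]; last by rewrite H2 Hp2 !eqxx.
      case: (All x A) => // E; subst x. rewrite Hp1 in B. case: B => B. by case: N.
- right. split; last by left.
  right. exists e1. split => //. split; last exact: bdry_noncontr Hp1.
  apply: (hit_val1 Hh Hb H1 Hp1) => e3 H3 Hn.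
  move: Hn; case: (All e3 H3) => ->; rewrite ?Hp1 ?Hp2 // => H; by case: H.
- right. split; first by left.
  right. exists e2. split => //. split; last exact: bdry_noncontr Hp2.
  apply: (hit_val1 Hh Hb H2 Hp2) => e3 H3 Hn.
  move: Hn; case: (All e3 H3) => ->; rewrite ?Hp1 ?Hp2 // => H; by case: H.
- right; split; by left.
Qed.

Lemma sum_decomp v' (T : E G' -> R) (X : E G -> R) :
  (forall e', src e' = v' -> T e' = match phiE phi e' with
                                  | Some e => wR e' * dphi phi e' * X e | None => 0 end) ->
  sum_out v' T = \big[Rplus/0]_(e | src e == phiV phi v')
     ((\big[Rplus/0]_(e' | (src e' == v') && (phiE phi e' == Some e)) (wR e' * dphi phi e')) * X e).
Proof.
move=> HT. rewrite /sum_out.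
transitivity (\big[Rplus/0]_(e' | src e' == v') \big[Rplus/0]_(e | src e == phiV phi v')
   (if phiE phi e' == Some e then wR e' * dphi phi e' * X e else 0)).
  apply: eq_bigr => e' /eqP He'. rewrite HT //. case Hp: (phiE phi e') => [e0|].
  - rewrite (bigD1 e0) /=; last by rewrite (phiE_src Hp) He'.
    rewrite eqxx big1 ?Rplus_0_r // => e /andP [_ N].
    case: eqP => // E. case: E => E. by rewrite E eqxx in N.
  - by rewrite big1.
rewrite exchange_big. apply: eq_bigr => e _.
rewrite -big_mkcondr /= -sumR_mulr. by [].
Qed.

Lemma sum_zero v' (T : E G' -> R) (X : E G -> R) : harmonic phi -> bdry v' = false ->
  (forall e', src e' = v' -> T e' = match phiE phi e' with
                                  | Some e => wR e' * dphi phi e' * X e | None => 0 end) ->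
  (bdry (phiV phi v') = false -> sum_out (phiV phi v') (fun e => wR e * X e) = 0) ->
  sum_out v' T = 0.
Proof.
move=> Hh Hb HT HX. rewrite (sum_decomp HT).
case Hbv: (bdry (phiV phi v')).
  apply: sumR_0 => e _. rewrite sumR_0 ?Rmult_0_l // => e' /andP [/eqP A /eqP B].
  exfalso. by rewrite (bdry_noncontr Hb A B) in Hbv.
case: (pickP [pred e : E G | src e == phiV phi v']) => [e0 /eqP He0|Hn]; last first.
  by rewrite big_pred0.
set K := fun e => \big[Rplus/0]_(e' | (src e' == v') && (phiE phi e' == Some e))
                    (wR e' / wR e * dphi phi e').
transitivity (\big[Rplus/0]_(e | src e == phiV phi v') (K e0 * (wR e * X e))).
  apply: eq_bigr => e /eqP He.
  rewrite /K -(Hh v' Hb e e0 He He0).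
  rewrite -Rmult_assoc. congr Rmult. rewrite Rmult_comm -sumR_mull.
  apply: eq_bigr => e' _. have := wR_pos e. move=> Hw. field. lra.
rewrite sumR_mull. rewrite -/(sum_out (phiV phi v') (fun e => wR e * X e)) HX //. ring.
Qed.

End Phi.

Lemma Dn0 L g : 0 < L -> smooth_on L g -> Dn L g 0%nat 0 = g 0.
Proof. move=> HL Hg. case: (Dn_tower Hg) => T0 _. apply: T0; lra. Qed.

Lemma smooth_scale L h g k : 0 < L -> smooth_on L h -> (forall x, 0 <= x <= L -> g x = k * h x) ->
  smooth_on L g /\ forall n, Dn L g n 0 = k * Dn L h n 0.
Proof.
move=> HL Hh Hg.
have [S D] := @DnS L L h g 1 k HL Hh Rlt_0_1 (Rmult_1_l L) ltac:(move=> x Hx; rewrite Rmult_1_l; exact: Hg).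
split => // n. rewrite D; last lra. rewrite pow1 Rmult_0_r. ring.
Qed.

Lemma pair_lc (G : wmgraph) (e1 e2 : E G) h1 h2 c :
  smooth_on (len e1) h1 -> smooth_on (len e2) h2 ->
  (exists eps, 0 < eps /\ forall x, 0 <= x <= eps -> h1 x = c) ->
  (exists eps, 0 < eps /\ forall x, 0 <= x <= eps -> h2 x = c) ->
  pair_smooth e1 e2 h1 h2.
Proof.
move=> S1 S2 [eps1 [He1 C1]] [eps2 [He2 C2]].
have [A1 B1] := DnLC (len_pos e1) S1 He1 C1.
have [A2 B2] := DnLC (len_pos e2) S2 He2 C2.
case=> [|n]; first by rewrite A1 A2 /=; ring.
rewrite B1 B2. ring.
Qed.

Lemma pair_transfer (w1 w2 w1' w2' d1 d2 a1 a2 b1 b2 g rho : R) (H1 H2 : nat -> R) :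
  (forall n, w1 ^ n * (a1 * H1 n) = (-1) ^ n * w2 ^ n * (a2 * H2 n)) ->
  rho * w1 = w1' * d1 -> rho * w2 = w2' * d2 -> b1 = g * a1 -> b2 = g * a2 ->
  forall n, w1' ^ n * (b1 * d1 ^ n * H1 n) = (-1) ^ n * w2' ^ n * (b2 * d2 ^ n * H2 n).
Proof.
move=> H E1 E2 F1 F2 n.
transitivity (g * rho ^ n * (w1 ^ n * (a1 * H1 n))).
  have : w1' ^ n * d1 ^ n = rho ^ n * w1 ^ n by rewrite -!Rpow_mult_distr E1.
  rewrite F1. move=> K. transitivity (g * a1 * H1 n * (w1' ^ n * d1 ^ n)); first ring.
  rewrite K; ring.
rewrite H.
have : w2' ^ n * d2 ^ n = rho ^ n * w2 ^ n by rewrite -!Rpow_mult_distr E2.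
rewrite F2. move=> K. transitivity (g * a2 * H2 n * (-1) ^ n * (rho ^ n * w2 ^ n)); first ring.
rewrite -K; ring.
Qed.

Section Main.
Variables (G' G : wmgraph) (phi : plmap G' G).
Hypothesis Hh : harmonic phi.

Lemma pull_Some e' e h g c : phiE phi e' = Some e -> smooth_on (len e) h ->
  (forall x, 0 <= x <= len e' -> g x = c * h (dphi phi e' * x)) ->
  smooth_on (len e') g /\ forall n x, 0 <= x <= len e' ->
     Dn (len e') g n x = c * dphi phi e' ^ n * Dn (len e) h n (dphi phi e' * x).
Proof.
move=> Hp Hs Hg. exact: (DnS (len_pos e') Hs (dphi_pos Hp) (dphi_len Hp) Hg).
Qed.

Lemma in0 (e' : E G') : 0 <= 0 <= len e'.
Proof. have := len_pos e'; lra. Qed.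

Lemma sm00 f e' : A00 f -> smooth_on (len e') (fE (pull0 phi f) e').
Proof.
case=> [_ [_ [Fsm _]]]. case Hp: (phiE phi e') => [e|].
  have [S _] := pull_Some (c := 1) (g := fE (pull0 phi f) e') Hp (Fsm e)
     ltac:(move=> x _; rewrite /= Hp; ring).
  exact: S.
have [S _] := DnC (g := fE (pull0 phi f) e') (c := fV f (phiV phi (src e'))) (len_pos e')
     ltac:(move=> x _; rewrite /= Hp //).
exact: S.
Qed.

Lemma lc00 f v' e' : A00 f -> src e' = v' -> LC phi v' e' ->
  exists eps, 0 < eps /\ forall x, 0 <= x <= eps -> fE (pull0 phi f) e' x = fV f (phiV phi v').
Proof.
move=> [F0 [_ [_ Fint]]] He [Hp|[e [Hp [Vv Bv]]]].
  exists 1; split; first lra. move=> x _. by rewrite /= Hp He.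
have Se : src e = phiV phi v' by rewrite (phiE_src Hp) He.
case: ((Fint _ Bv).1 Vv e Se) => eps [Heps C].
have Hd := dphi_pos Hp.
exists (eps / dphi phi e'); split; first exact: Rdiv_lt_0_compat.
move=> x Hx. rewrite /= Hp. apply: C. split; first by apply: Rmult_le_pos; lra.
have := Rmult_le_compat_l _ _ _ (Rlt_le _ _ Hd) (proj2 Hx).
by replace (dphi phi e' * (eps / dphi phi e')) with eps by (field; lra).
Qed.

Lemma pull0_A00 f : A00 f -> A00 (pull0 phi f).
Proof.
move=> Hf. have Hf' := Hf. case: Hf => [F0 [Frev [Fsm Fint]]].
split.
  move=> e' /=. case Hp: (phiE phi e') => [e|] //. by rewrite Rmult_0_r F0 (phiE_src Hp).
split.
  move=> e' x Hx /=. rewrite phiE_rev dphi_rev. case Hp: (phiE phi e') => [e|] /=.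
  - rewrite Frev; last exact: in_scaled Hp Hx. congr (fE f e). rewrite -(dphi_len Hp); ring.
  - by rewrite (phiE_contr Hp).
split; first by move=> e'; exact: sm00.
move=> v' Hb. split; [|split].
- move=> Hv e' He. exact: (lc00 Hf' He (v1_cases Hh Hb Hv He)).
- move=> Hv e1' e2' H1 H2 H12.
  case: (v2_cases Hh Hb Hv H1 H2 H12) => [[e1 [e2 [Hp1 [Hp2 [N [Vv [Bv Hr]]]]]]]|[L1 L2]].
  + have S1 : src e1 = phiV phi v' by rewrite (phiE_src Hp1) H1.
    have S2 : src e2 = phiV phi v' by rewrite (phiE_src Hp2) H2.
    have P := (Fint _ Bv).2.1 Vv e1 e2 S1 S2 N.
    have [_ D1] := pull_Some (c := 1) (g := fE (pull0 phi f) e1') Hp1 (Fsm e1)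
       ltac:(move=> x _; rewrite /= Hp1; ring).
    have [_ D2] := pull_Some (c := 1) (g := fE (pull0 phi f) e2') Hp2 (Fsm e2)
       ltac:(move=> x _; rewrite /= Hp2; ring).
    have W1 := wR_pos e1. have W2 := wR_pos e2.
    have Tr := pair_transfer (w1 := wR e1) (w2 := wR e2) (w1' := wR e1') (w2' := wR e2')
      (d1 := dphi phi e1') (d2 := dphi phi e2') (a1 := 1) (a2 := 1) (b1 := 1) (b2 := 1) (g := 1)
      (rho := wR e1' / wR e1 * dphi phi e1')
      (H1 := fun n => Dn (len e1) (fE f e1) n 0) (H2 := fun n => Dn (len e2) (fE f e2) n 0)
      ltac:(move=> k; rewrite !Rmult_1_l; exact: P)
      ltac:(field; lra) ltac:(rewrite Hr; field; lra) ltac:(ring) ltac:(ring).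
    move=> n. rewrite D1 ?D2; try exact: in0. rewrite !Rmult_0_r. exact: Tr n.
  + apply: (pair_lc (c := fV f (phiV phi v'))); try exact: sm00.
    * exact: lc00 Hf' H1 L1.
    * exact: lc00 Hf' H2 L2.
- move=> Hv.
  apply: (sum_zero (X := fun e => Dn (len e) (fE f e) 1 0) Hh Hb).
  + move=> e' He'. case Hp: (phiE phi e') => [e|].
    * have [_ D1] := pull_Some (c := 1) (g := fE (pull0 phi f) e') Hp (Fsm e)
         ltac:(move=> x _; rewrite /= Hp; ring).
      rewrite D1; last exact: in0. rewrite Rmult_0_r /=. ring.
    * have [_ D] := DnC (g := fE (pull0 phi f) e') (c := fV f (phiV phi (src e'))) (len_pos e')
         ltac:(move=> x _; rewrite /= Hp //).
      rewrite D; last exact: in0. ring.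
  + move=> Bv. apply: sum_out_cases.
    * move=> Vv e He. case: ((Fint _ Bv).1 Vv e He) => eps [Heps C].
      have [_ Z] := DnLC (len_pos e) (Fsm e) Heps C. by rewrite Z Rmult_0_r.
    * move=> Vv e1 e2 S1 S2 N. have := (Fint _ Bv).2.1 Vv e1 e2 S1 S2 N 1%nat.
      rewrite /=. lra.
    * exact: (Fint _ Bv).2.2.
Qed.

Lemma sm10 a e' : A10 a -> smooth_on (len e') (pull1 phi a e').
Proof.
case=> [_ [Asm _]]. case Hp: (phiE phi e') => [e|].
  have [S _] := pull_Some (c := dphi phi e') (g := pull1 phi a e') Hp (Asm e)
     ltac:(move=> x _; rewrite /pull1 Hp; ring).
  exact: S.
have [S _] := DnC (g := pull1 phi a e') (c := 0) (len_pos e')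
     ltac:(move=> x _; rewrite /pull1 Hp //).
exact: S.
Qed.

Lemma lc10 a v' e' : A10 a -> src e' = v' -> LC phi v' e' ->
  exists eps, 0 < eps /\ forall x, 0 <= x <= eps -> pull1 phi a e' x = 0.
Proof.
move=> [_ [_ Aint]] He [Hp|[e [Hp [Vv Bv]]]].
  exists 1; split; first lra. move=> x _. by rewrite /pull1 Hp.
have Se : src e = phiV phi v' by rewrite (phiE_src Hp) He.
case: ((Aint _ Bv).1 Vv e Se) => eps [Heps C].
have Hd := dphi_pos Hp.
exists (eps / dphi phi e'); split; first exact: Rdiv_lt_0_compat.
move=> x Hx. rewrite /pull1 Hp. rewrite C; first ring. split; first by apply: Rmult_le_pos; lra.
have := Rmult_le_compat_l _ _ _ (Rlt_le _ _ Hd) (proj2 Hx).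
by replace (dphi phi e' * (eps / dphi phi e')) with eps by (field; lra).
Qed.

Lemma pull1_A10 a : A10 a -> A10 (pull1 phi a).
Proof.
move=> Ha. have Ha' := Ha. case: Ha => [Arev [Asm Aint]].
split.
  move=> e' x Hx. rewrite /pull1 phiE_rev dphi_rev. case Hp: (phiE phi e') => [e|] /=.
  - rewrite Arev; last exact: in_scaled Hp Hx.
    have -> : dphi phi e' * (len e' - x) = len e - dphi phi e' * x by rewrite -(dphi_len Hp); ring.
    ring.
  - ring.
split; first by move=> e'; exact: sm10.
move=> v' Hb. split; [|split].
- move=> Hv e' He. exact: (lc10 Ha' He (v1_cases Hh Hb Hv He)).
- move=> Hv e1' e2' H1 H2 H12.
  case: (v2_cases Hh Hb Hv H1 H2 H12) => [[e1 [e2 [Hp1 [Hp2 [N [Vv [Bv Hr]]]]]]]|[L1 L2]].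
  + have S1 : src e1 = phiV phi v' by rewrite (phiE_src Hp1) H1.
    have S2 : src e2 = phiV phi v' by rewrite (phiE_src Hp2) H2.
    have P := (Aint _ Bv).2.1 Vv e1 e2 S1 S2 N.
    have [_ G1] := smooth_scale (k := wR e1) (g := fun x => wR e1 * a e1 x) (len_pos e1) (Asm e1)
       ltac:(move=> x _ /=; ring).
    have [_ G2] := smooth_scale (k := - wR e2) (g := fun x => - (wR e2 * a e2 x)) (len_pos e2) (Asm e2)
       ltac:(move=> x _ /=; ring).
    have [_ D1] := pull_Some (c := wR e1' * dphi phi e1') (g := fun x => wR e1' * pull1 phi a e1' x)
       Hp1 (Asm e1) ltac:(move=> x _; rewrite /pull1 Hp1; ring).
    have [_ D2] := pull_Some (c := - (wR e2' * dphi phi e2')) (g := fun x => - (wR e2' * pull1 phi a e2' x))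
       Hp2 (Asm e2) ltac:(move=> x _; rewrite /pull1 Hp2; ring).
    have W1 := wR_pos e1. have W2 := wR_pos e2.
    have Tr := pair_transfer (w1 := wR e1) (w2 := wR e2) (w1' := wR e1') (w2' := wR e2')
      (d1 := dphi phi e1') (d2 := dphi phi e2') (a1 := wR e1) (a2 := - wR e2)
      (b1 := wR e1' * dphi phi e1') (b2 := - (wR e2' * dphi phi e2'))
      (g := wR e1' / wR e1 * dphi phi e1')
      (rho := wR e1' / wR e1 * dphi phi e1')
      (H1 := fun n => Dn (len e1) (a e1) n 0) (H2 := fun n => Dn (len e2) (a e2) n 0)
      ltac:(move=> k; rewrite -G1 -G2; exact: P k)
      ltac:(field; lra) ltac:(rewrite Hr; field; lra) ltac:(field; lra) ltac:(rewrite Hr; field; lra).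
    move=> n. rewrite D1 ?D2; try exact: in0. rewrite !Rmult_0_r. exact: Tr n.
  + apply: (pair_lc (c := 0)).
    * have [S _] := smooth_scale (k := wR e1') (g := fun x => wR e1' * pull1 phi a e1' x)
         (len_pos e1') (sm10 e1' Ha') ltac:(move=> x _ /=; ring). exact: S.
    * have [S _] := smooth_scale (k := - wR e2') (g := fun x => - (wR e2' * pull1 phi a e2' x))
         (len_pos e2') (sm10 e2' Ha') ltac:(move=> x _ /=; ring). exact: S.
    * case: (lc10 Ha' H1 L1) => eps [He C]. exists eps; split => // x Hx. rewrite C //; ring.
    * case: (lc10 Ha' H2 L2) => eps [He C]. exists eps; split => // x Hx. rewrite C //; ring.
- move=> Hv.
  apply: (sum_zero (X := fun e => a e 0) Hh Hb).
  + move=> e' He'. rewrite /pull1. case Hp: (phiE phi e') => [e|]; last ring.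
    rewrite Rmult_0_r. ring.
  + move=> Bv. apply: sum_out_cases.
    * move=> Vv e He. case: ((Aint _ Bv).1 Vv e He) => eps [Heps C].
      rewrite C; [ring|lra].
    * move=> Vv e1 e2 S1 S2 N. have := (Aint _ Bv).2.1 Vv e1 e2 S1 S2 N 0%nat.
      have [T1 _] := smooth_scale (k := wR e1) (g := fun x => wR e1 * a e1 x) (len_pos e1) (Asm e1)
        ltac:(move=> x _ /=; ring).
      have [T2 _] := smooth_scale (k := - wR e2) (g := fun x => - (wR e2 * a e2 x)) (len_pos e2) (Asm e2)
        ltac:(move=> x _ /=; ring).
      rewrite (Dn0 (len_pos e1) T1) (Dn0 (len_pos e2) T2) /=. lra.
    * exact: (Aint _ Bv).2.2.
Qed.

Lemma sm11 a e' : A11 a -> smooth_on (len e') (pull11 phi a e').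
Proof.
case=> [_ [Asm _]]. case Hp: (phiE phi e') => [e|].
  have [S _] := pull_Some (c := dphi phi e' ^ 2) (g := pull11 phi a e') Hp (Asm e)
     ltac:(move=> x _; rewrite /pull11 Hp; ring).
  exact: S.
have [S _] := DnC (g := pull11 phi a e') (c := 0) (len_pos e')
     ltac:(move=> x _; rewrite /pull11 Hp //).
exact: S.
Qed.

Lemma lc11 a v' e' : A11 a -> src e' = v' -> LC phi v' e' ->
  exists eps, 0 < eps /\ forall x, 0 <= x <= eps -> pull11 phi a e' x = 0.
Proof.
move=> [_ [_ Aint]] He [Hp|[e [Hp [Vv Bv]]]].
  exists 1; split; first lra. move=> x _. by rewrite /pull11 Hp.
have Se : src e = phiV phi v' by rewrite (phiE_src Hp) He.
case: ((Aint _ Bv).1 Vv e Se) => eps [Heps C].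
have Hd := dphi_pos Hp.
exists (eps / dphi phi e'); split; first exact: Rdiv_lt_0_compat.
move=> x Hx. rewrite /pull11 Hp. rewrite C; first ring. split; first by apply: Rmult_le_pos; lra.
have := Rmult_le_compat_l _ _ _ (Rlt_le _ _ Hd) (proj2 Hx).
by replace (dphi phi e' * (eps / dphi phi e')) with eps by (field; lra).
Qed.

Lemma pull11_A11 a : A11 a -> A11 (pull11 phi a).
Proof.
move=> Ha. have Ha' := Ha. case: Ha => [Arev [Asm Aint]].
split.
  move=> e' x Hx. rewrite /pull11 phiE_rev dphi_rev. case Hp: (phiE phi e') => [e|] /=.
  - rewrite Arev; last exact: in_scaled Hp Hx.
    have -> : dphi phi e' * (len e' - x) = len e - dphi phi e' * x by rewrite -(dphi_len Hp); ring.
    ring.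
  - ring.
split; first by move=> e'; exact: sm11.
move=> v' Hb. split.
- move=> Hv e' He. exact: (lc11 Ha' He (v1_cases Hh Hb Hv He)).
- move=> Hv e1' e2' H1 H2 H12.
  case: (v2_cases Hh Hb Hv H1 H2 H12) => [[e1 [e2 [Hp1 [Hp2 [N [Vv [Bv Hr]]]]]]]|[L1 L2]].
  + have S1 : src e1 = phiV phi v' by rewrite (phiE_src Hp1) H1.
    have S2 : src e2 = phiV phi v' by rewrite (phiE_src Hp2) H2.
    have P := (Aint _ Bv).2 Vv e1 e2 S1 S2 N.
    have [_ G1] := smooth_scale (k := wR e1 ^ 2) (g := fun x => wR e1 ^ 2 * a e1 x) (len_pos e1) (Asm e1)
       ltac:(move=> x _ /=; ring).
    have [_ G2] := smooth_scale (k := wR e2 ^ 2) (g := fun x => wR e2 ^ 2 * a e2 x) (len_pos e2) (Asm e2)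
       ltac:(move=> x _ /=; ring).
    have [_ D1] := pull_Some (c := wR e1' ^ 2 * dphi phi e1' ^ 2) (g := fun x => wR e1' ^ 2 * pull11 phi a e1' x)
       Hp1 (Asm e1) ltac:(move=> x _; rewrite /pull11 Hp1; ring).
    have [_ D2] := pull_Some (c := wR e2' ^ 2 * dphi phi e2' ^ 2) (g := fun x => wR e2' ^ 2 * pull11 phi a e2' x)
       Hp2 (Asm e2) ltac:(move=> x _; rewrite /pull11 Hp2; ring).
    have W1 := wR_pos e1. have W2 := wR_pos e2.
    have Tr := pair_transfer (w1 := wR e1) (w2 := wR e2) (w1' := wR e1') (w2' := wR e2')
      (d1 := dphi phi e1') (d2 := dphi phi e2') (a1 := wR e1 ^ 2) (a2 := wR e2 ^ 2)
      (b1 := wR e1' ^ 2 * dphi phi e1' ^ 2) (b2 := wR e2' ^ 2 * dphi phi e2' ^ 2)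
      (g := (wR e1' / wR e1 * dphi phi e1') ^ 2)
      (rho := wR e1' / wR e1 * dphi phi e1')
      (H1 := fun n => Dn (len e1) (a e1) n 0) (H2 := fun n => Dn (len e2) (a e2) n 0)
      ltac:(move=> k; rewrite -G1 -G2; exact: P k)
      ltac:(field; lra) ltac:(rewrite Hr; field; lra) ltac:(field; lra) ltac:(rewrite Hr; field; lra).
    move=> n. rewrite D1 ?D2; try exact: in0. rewrite !Rmult_0_r. exact: Tr n.
  + apply: (pair_lc (c := 0)).
    * have [S _] := smooth_scale (k := wR e1' ^ 2) (g := fun x => wR e1' ^ 2 * pull11 phi a e1' x)
         (len_pos e1') (sm11 e1' Ha') ltac:(move=> x _ /=; ring). exact: S.
    * have [S _] := smooth_scale (k := wR e2' ^ 2) (g := fun x => wR e2' ^ 2 * pull11 phi a e2' x)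
         (len_pos e2') (sm11 e2' Ha') ltac:(move=> x _ /=; ring). exact: S.
    * case: (lc11 Ha' H1 L1) => eps [He C]. exists eps; split => // x Hx. rewrite C //; ring.
    * case: (lc11 Ha' H2 L2) => eps [He C]. exists eps; split => // x Hx. rewrite C //; ring.
Qed.

End Main.

Unset Implicit Arguments.
Set Strict Implicit.

Theorem lemma3p11 (G' G : wmgraph) (phi : plmap G' G) :
  harmonic phi ->
  (* phi^* maps A^{p,q}(Sigma) into A^{p,q}(Sigma') *)
  (forall f, A00 f -> A00 (pull0 phi f)) /\
  (forall a, A10 a -> A10 (pull1 phi a)) /\
  (forall a, A01 a -> A01 (pull1 phi a)) /\
  (forall a, A11 a -> A11 (pull11 phi a)) /\
  (* R-linearity in each bidegree *)
  (forall f g, A00 f -> A00 g -> eq0 (pull0 phi (add0 f g)) (add0 (pull0 phi f) (pull0 phi g))) /\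
  (forall c f, A00 f -> eq0 (pull0 phi (scale0 c f)) (scale0 c (pull0 phi f))) /\
  (forall a b, A10 a -> A10 b -> eqc (pull1 phi (addc a b)) (addc (pull1 phi a) (pull1 phi b))) /\
  (forall c a, A10 a -> eqc (pull1 phi (scalec c a)) (scalec c (pull1 phi a))) /\
  (forall a b, A01 a -> A01 b -> eqc (pull1 phi (addc a b)) (addc (pull1 phi a) (pull1 phi b))) /\
  (forall c a, A01 a -> eqc (pull1 phi (scalec c a)) (scalec c (pull1 phi a))) /\
  (forall a b, A11 a -> A11 b -> eqc (pull11 phi (addc a b)) (addc (pull11 phi a) (pull11 phi b))) /\
  (forall c a, A11 a -> eqc (pull11 phi (scalec c a)) (scalec c (pull11 phi a))) /\
  (* unit and products *)
  eq0 (pull0 phi (one0 G)) (one0 G') /\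
  (forall f g, A00 f -> A00 g -> eq0 (pull0 phi (mul0 f g)) (mul0 (pull0 phi f) (pull0 phi g))) /\
  (forall f a, A00 f -> A10 a -> eqc (pull1 phi (mul0c f a)) (mul0c (pull0 phi f) (pull1 phi a))) /\
  (forall f a, A00 f -> A01 a -> eqc (pull1 phi (mul0c f a)) (mul0c (pull0 phi f) (pull1 phi a))) /\
  (forall f a, A00 f -> A11 a -> eqc (pull11 phi (mul0c f a)) (mul0c (pull0 phi f) (pull11 phi a))) /\
  (forall a b, A10 a -> A01 b ->
     eqc (pull11 phi (wedge10_01 a b)) (wedge10_01 (pull1 phi a) (pull1 phi b))) /\
  (forall b a, A01 b -> A10 a ->
     eqc (pull11 phi (wedge01_10 b a)) (wedge01_10 (pull1 phi b) (pull1 phi a))) /\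
  (* commutation with d' and d'' *)
  (forall f, A00 f -> eqc (pull1 phi (d'0 f)) (d'0 (pull0 phi f))) /\
  (forall f, A00 f -> eqc (pull1 phi (d''0 f)) (d''0 (pull0 phi f))) /\
  (forall a, A10 a -> eqc (pull11 phi (d''10 a)) (d''10 (pull1 phi a))) /\
  (forall a, A01 a -> eqc (pull11 phi (d'01 a)) (d'01 (pull1 phi a))).
Proof.
move=> Hh.
have D0 : forall f, A00 f -> eqc (pull1 phi (d'0 f)) (d'0 (pull0 phi f)).
  move=> f [_ [_ [Fsm _]]] e' x Hx. rewrite /pull1 /d'0.
  case Hp: (phiE phi e') => [e|].
  - have [_ D1] := pull_Some (c := 1) (g := fE (pull0 phi f) e') Hp (Fsm e)
       ltac:(move=> y _; rewrite /= Hp; ring).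
    rewrite D1 //. simpl. ring.
  - have [_ D] := DnC (g := fE (pull0 phi f) e') (c := fV f (phiV phi (src e'))) (len_pos e')
       ltac:(move=> y _; rewrite /= Hp //).
    by rewrite D.
have D10 : forall a, A10 a -> eqc (pull11 phi (d''10 a)) (d''10 (pull1 phi a)).
  move=> a [_ [Asm _]] e' x Hx. rewrite /pull11 /d''10.
  case Hp: (phiE phi e') => [e|].
  - have [_ D1] := pull_Some (c := dphi phi e') (g := pull1 phi a e') Hp (Asm e)
       ltac:(move=> y _; rewrite /pull1 Hp; ring).
    rewrite D1 //. simpl. ring.
  - have [_ D] := DnC (g := pull1 phi a e') (c := 0) (len_pos e')
       ltac:(move=> y _; rewrite /pull1 Hp //).
    rewrite D //. ring.
have D01 : forall a, A01 a -> eqc (pull11 phi (d'01 a)) (d'01 (pull1 phi a)).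
  move=> a [_ [Asm _]] e' x Hx. rewrite /pull11 /d'01.
  case Hp: (phiE phi e') => [e|].
  - have [_ D1] := pull_Some (c := dphi phi e') (g := pull1 phi a e') Hp (Asm e)
       ltac:(move=> y _; rewrite /pull1 Hp; ring).
    rewrite D1 //. simpl. ring.
  - have [_ D] := DnC (g := pull1 phi a e') (c := 0) (len_pos e')
       ltac:(move=> y _; rewrite /pull1 Hp //).
    by rewrite D.
split; first exact: pull0_A00.
split; first exact: pull1_A10.
split; first exact: pull1_A10.
split; first exact: pull11_A11.
split.
  move=> f g _ _; split => [v|e' x _] //=. by case: (phiE phi e').
split.
  move=> c f _; split => [v|e' x _] //=. by case: (phiE phi e').
split; first by move=> a b _ _ e' x _; rewrite /pull1 /pull11 /addc; case: (phiE phi e') => *; ring.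
split; first by move=> c a _ e' x _; rewrite /pull1 /pull11 /scalec; case: (phiE phi e') => *; ring.
split; first by move=> a b _ _ e' x _; rewrite /pull1 /pull11 /addc; case: (phiE phi e') => *; ring.
split; first by move=> c a _ e' x _; rewrite /pull1 /pull11 /scalec; case: (phiE phi e') => *; ring.
split; first by move=> a b _ _ e' x _; rewrite /pull1 /pull11 /addc; case: (phiE phi e') => *; ring.
split; first by move=> c a _ e' x _; rewrite /pull1 /pull11 /scalec; case: (phiE phi e') => *; ring.
split.
  split => [v|e' x _] //=. by case: (phiE phi e').
split.
  move=> f g _ _; split => [v|e' x _] //=. by case: (phiE phi e').
do 5 (split; first by move=> f a _ _ e' x _; rewrite /pull1 /pull11 /mul0c /wedge10_01 /wedge01_10 /=;
                      case: (phiE phi e') => *; ring).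
split; first exact: D0.
split; first exact: D0.
split; first exact: D10.
exact: D01.
Qed.
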